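(* Let $E$ be a complex Banach lattice and let $A: E \supseteq D(A) \to E$ be a densely defined, closed, real linear operator. Let $u \in E_+$ and let $\varphi \in E'_+$ be strictly positive. Assume: (Domination) there are integers $m_1, m_2 \ge 0$ such that $D(A^{m_1}) \subseteq E_u$ and $D((A')^{m_2}) \subseteq (E')_\varphi$; (Spectral) there is $\lambda_0 \in \mathbb{R}$ which is a geometrically simple eigenvalue of $A$ and an eigenvalue of $A'$, such that $\ker(\lambda_0 - A)$ is spanned by a vector $v$ with $v \succeq u$, and $\ker(\lambda_0 - A')$ contains an element $\psi$ with $\psi \succeq \varphi$. Let $\mu_0$ be a real number in $\rho(A)$. (a) If $R(\mu_0,A)\succeq -u\otimes\varphi$, then $R(\mu_0,A)^n\succeq -u\otimes\varphi$ for all $n\in\mathbb{N}$. (b) If $R(\mu_0,A)\preceq u\otimes\varphi$, then $(-1)^{n-1}R(\mu_0,A)^n\preceq u\otimes\varphi$ for all $n\in\mathbb{N}$.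
   Context: $E_{\mathbb{R}}$ denotes the real part of $E$. A linear operator $A$ is real if $D(A) = (D(A)\cap E_{\mathbb{R}}) + i(D(A)\cap E_{\mathbb{R}})$ and $A$ maps $D(A)\cap E_{\mathbb{R}}$ into $E_{\mathbb{R}}$. $R(\mu,A) = (\mu - A)^{-1}$. For real vectors, $v \succeq u$ means $v \ge cu$ for some $c>0$. For bounded real operators, $T\succeq S$ (equivalently $S\preceq T$) means $T - cS$ is positive for some $c>0$. $u\otimes\varphi$ is $f\mapsto\langle\varphi,f\rangle u$. $\varphi$ strictly positive: $\langle\varphi,f\rangle>0$ for all $0\ne f\in E_+$. $E_u = \{x : |x|\le cu \text{ for some } c\ge0\}$; $(E')_\varphi = \{x'\in E' : |x'|\le c\varphi \text{ for some } c\ge 0\}$. Geometrically simple: one-dimensional eigenspace. *)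

(* Defs.v *)
From HB Require Import structures.
From mathcomp Require Import all_boot all_order all_algebra.
From mathcomp Require Import all_classical all_reals all_analysis.
Set Implicit Arguments. Unset Strict Implicit. Unset Printing Implicit Defensive.
Import Order.TTheory GRing.Theory Num.Theory.
Import numFieldNormedType.Exports.
Local Open Scope classical_set_scope.
Local Open Scope ring_scope.

Section BanachLattice.
Context {R : realType} {ER : completeNormedModType R}.

Definition labs (sup : ER -> ER -> ER) (x : ER) : ER := sup x (- x).

Record is_banach_lattice (le : ER -> ER -> Prop) (sup : ER -> ER -> ER) : Prop := {
  bl_refl : forall x, le x x;
  bl_antisym : forall x y, le x y -> le y x -> x = y;
  bl_trans : forall x y z, le x y -> le y z -> le x z;
  bl_add : forall x y z, le x y -> le (x + z) (y + z);
  bl_scale : forall (a : R) x, 0 <= a -> le 0 x -> le 0 (a *: x);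
  bl_sup_l : forall x y, le x (sup x y);
  bl_sup_r : forall x y, le y (sup x y);
  bl_sup_min : forall x y z, le x z -> le y z -> le (sup x y) z;
  bl_norm : forall x y, le (labs sup x) (labs sup y) -> `|x| <= `|y|
}.
End BanachLattice.

(* The complexification E = E_R + i E_R, represented as ER * ER        *)
(* (first component = real part), with the product topology.           *)
(* Complex scalars a + ib are represented as pairs (a, b).             *)
Section Complexification.
Context {R : realType} {ER : completeNormedModType R}.

Definition cplx := (ER * ER)%type.

(* (a + ib)(x + iy) = (ax - by) + i(ay + bx) *)
Definition cxscale (c : R * R) (x : cplx) : cplx :=
  (c.1 *: x.1 - c.2 *: x.2, c.1 *: x.2 + c.2 *: x.1).

Definition cx_real (x : ER) : cplx := (x, 0).

Definition rdual (f : ER -> R) : Prop :=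
  (forall (a : R) x y, f (a *: x + y) = a * f x + f y) /\ continuous f.

(* The dual E' is identified (as usual for complex Banach lattices)    *)
(* with the complexification of (E_R)'; x' = (f1, f2) acts by          *)
(* <f1 + i f2, x1 + i x2> = (f1 x1 - f2 x2) + i (f1 x2 + f2 x1).       *)
Definition cdual := ((ER -> R) * (ER -> R))%type.
Definition is_dual (x' : cdual) : Prop := rdual x'.1 /\ rdual x'.2.
Definition cx_pairing (x' : cdual) (x : cplx) : R * R :=
  (x'.1 x.1 - x'.2 x.2, x'.1 x.2 + x'.2 x.1).
Definition dual_real (f : ER -> R) : cdual := (f, fun _ => 0).
Definition dual_scale (a : R) (x' : cdual) : cdual :=
  (fun x => a * x'.1 x, fun x => a * x'.2 x).

Definition dle (le : ER -> ER -> Prop) (f g : ER -> R) : Prop :=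
  forall x, le 0 x -> f x <= g x.

Definition cpos (le : ER -> ER -> Prop) (x : cplx) : Prop :=
  x.2 = 0 /\ le 0 x.1.

(* principal ideal E_u : |x| <= c u, with the complex modulus           *)
(* |x1 + i x2| = sup_theta |cos theta x1 + sin theta x2|.              *)
Definition ideal_E (le : ER -> ER -> Prop) (u : ER) (x : cplx) : Prop :=
  exists c : R, 0 <= c /\ forall theta : R,
    le (cos theta *: x.1 + sin theta *: x.2) (c *: u) /\
    le (- (cos theta *: x.1 + sin theta *: x.2)) (c *: u).

Definition ideal_Ed (le : ER -> ER -> Prop) (phi : ER -> R) (x' : cdual) : Prop :=
  exists c : R, 0 <= c /\ forall theta : R,
    dle le (fun x => cos theta * x'.1 x + sin theta * x'.2 x) (fun x => c * phi x) /\
    dle le (fun x => - (cos theta * x'.1 x + sin theta * x'.2 x)) (fun x => c * phi x).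

Definition op_linear (D : set cplx) (A : cplx -> cplx) : Prop :=
  D 0 /\ (forall x y, D x -> D y -> D (x + y)) /\
  (forall c x, D x -> D (cxscale c x)) /\
  (forall c x y, D x -> D y -> A (cxscale c x + y) = cxscale c (A x) + A y).

Definition densely_defined (D : set cplx) : Prop := closure D = setT.

Definition op_closed (D : set cplx) (A : cplx -> cplx) : Prop :=
  closed [set p : cplx * cplx | D p.1 /\ p.2 = A p.1].

Definition op_real (D : set cplx) (A : cplx -> cplx) : Prop :=
  (forall x1 x2, D (x1, x2) <-> (D (cx_real x1) /\ D (cx_real x2))) /\
  (forall x, D (cx_real x) -> (A (cx_real x)).2 = 0).

Definition adjoint_graph (D : set cplx) (A : cplx -> cplx) (x' y' : cdual) : Prop :=
  is_dual x' /\ is_dual y' /\ forall x, D x -> cx_pairing x' (A x) = cx_pairing y' x.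

Fixpoint dom_pow {T : Type} (G : T -> T -> Prop) (B : set T) (m : nat) : set T :=
  match m with
  | 0 => B
  | m'.+1 => [set x | exists y, G x y /\ dom_pow G B m' y]
  end.

Definition op_graph (D : set cplx) (A : cplx -> cplx) (x y : cplx) : Prop :=
  D x /\ y = A x.

Definition is_resolvent (D : set cplx) (A : cplx -> cplx) (mu : R) (Rmu : cplx -> cplx) : Prop :=
  (forall y, D (Rmu y) /\ mu *: Rmu y - A (Rmu y) = y) /\
  (forall x, D x -> Rmu (mu *: x - A x) = x) /\
  continuous Rmu.

Definition cx_tensor (u : ER) (phi : cdual) (f : cplx) : cplx :=
  cxscale (cx_pairing phi f) (cx_real u).

Definition op_ge (le : ER -> ER -> Prop) (T S : cplx -> cplx) : Prop :=
  exists c : R, 0 < c /\ forall x, cpos le x -> cpos le (T x - c *: S x).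

End Complexification.

(* Main.v *)
Require Import Defs.
From HB Require Import structures.
From mathcomp Require Import all_boot all_order all_algebra.
From mathcomp Require Import all_classical all_reals all_analysis.
From mathcomp Require Import ring.
Import Order.TTheory GRing.Theory Num.Theory.
Import numFieldNormedType.Exports.
Local Open Scope classical_set_scope.
Local Open Scope ring_scope.
Lemma le_subP {R : realType} {ER : completeNormedModType R} {le sup}
  (HBL : @is_banach_lattice R ER le sup) (a b : ER) :
  le a b <-> le 0 (b - a).
Proof.
split=> h.
- have := bl_add HBL (- a) h. by rewrite subrr.
- have := bl_add HBL a h. by rewrite add0r subrK.
Qed.

Lemma pos_add {R : realType} {ER : completeNormedModType R} {le sup}
  (HBL : @is_banach_lattice R ER le sup) (a b : ER) :
  le 0 a -> le 0 b -> le 0 (a + b).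
Proof.
move=> ha hb; apply: (bl_trans HBL ha).
have := bl_add HBL a hb. by rewrite add0r addrC.
Qed.

Lemma le_scale {R : realType} {ER : completeNormedModType R} {le sup}
  (HBL : @is_banach_lattice R ER le sup) (s : R) (a b : ER) :
  0 <= s -> le a b -> le (s *: a) (s *: b).
Proof.
move=> hs h; apply (proj2 (le_subP HBL _ _)); have {}h := proj1 (le_subP HBL _ _) h.
rewrite -scalerBr. exact: (bl_scale HBL).
Qed.

Lemma le_scale_vec {R : realType} {ER : completeNormedModType R} {le sup}
  (HBL : @is_banach_lattice R ER le sup) (s t : R) (a : ER) :
  s <= t -> le 0 a -> le (s *: a) (t *: a).
Proof.
move=> hst ha; apply (proj2 (le_subP HBL _ _)).
rewrite -scalerBl. apply: (bl_scale HBL) => //. by rewrite subr_ge0.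
Qed.

Lemma cpos_add {R : realType} {ER : completeNormedModType R} {le sup}
  (HBL : @is_banach_lattice R ER le sup) (a b : @cplx R ER) :
  cpos le a -> cpos le b -> cpos le (a + b).
Proof.
move=> [a2 a1] [b2 b1]; split; first by rewrite /= a2 b2 addr0.
exact: (pos_add HBL).
Qed.

Lemma cpos_scale {R : realType} {ER : completeNormedModType R} {le sup}
  (HBL : @is_banach_lattice R ER le sup) (s : R) (a : @cplx R ER) :
  0 <= s -> cpos le a -> cpos le (s *: a).
Proof.
move=> hs [a2 a1]; split; first by rewrite /= a2 scaler0.
exact: (bl_scale HBL).
Qed.

Lemma cpos_real {R : realType} {ER : completeNormedModType R} le
  (a : ER) : le 0 a -> cpos le (cx_real a : @cplx R ER).
Proof. by move=> h; split. Qed.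

Lemma iter_bound {R : realType} {ER : completeNormedModType R} {le sup}
  (HBL : @is_banach_lattice R ER le sup)
  (T : @cplx R ER -> @cplx R ER) (psi : ER -> R) (V : @cplx R ER) (t w K : R)
  (Hpsi_lin : forall a x y, psi (a *: x + y) = a * psi x + psi y)
  (HTadd : forall y s, T (y + s *: V) = T y + (s * t) *: V)
  (HpsiT : forall y, psi (T y).1 = t * psi y.1)
  (HpsiV : psi V.1 = w)
  (HK : forall y, cpos le y -> cpos le (T y + (K * psi y.1) *: V)) :
  forall n, exists C, forall x, cpos le x -> cpos le (iter n T x + (C * psi x.1) *: V).
Proof.
have psiD : forall x y, psi (x + y) = psi x + psi y.
  by move=> x y; rewrite -[x]scale1r Hpsi_lin mul1r scale1r.
have psiZ : forall a x, psi (a *: x) = a * psi x.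
  move=> a x; have := Hpsi_lin a x 0; rewrite addr0 => ->.
  have := Hpsi_lin 1 0 0; rewrite scale1r addr0 mul1r => h.
  have -> : psi 0 = 0 by apply/eqP; rewrite -[X in X == _](addrK (psi 0)) -h subrr.
  by rewrite addr0.
have psiIt : forall n x, psi (iter n T x).1 = t ^+ n * psi x.1.
  elim=> [|n IH] x /=; first by rewrite mul1r.
  by rewrite HpsiT IH exprS mulrA.
elim=> [|n [C HC]].
  exists 0 => x hx /=; by rewrite mul0r scale0r addr0.
exists (C * t + K * (t ^+ n + C * w)) => x hx.
have := HK _ (HC x hx).
have -> : (iter n T x + (C * psi x.1) *: V).1 = (iter n T x).1 + (C * psi x.1) *: V.1 by [].
rewrite psiD psiZ HpsiV psiIt HTadd /= -addrA -scalerDl.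
congr (cpos le (_ + _ *: V)). ring.
Qed.
Theorem proposition4p4 (R : realType) (ER : completeNormedModType R)
  (le : ER -> ER -> Prop) (sup : ER -> ER -> ER)
  (HBL : is_banach_lattice le sup)
  (D : set (@cplx R ER)) (A : @cplx R ER -> @cplx R ER)
  (Hlin : op_linear D A) (Hdense : densely_defined D)
  (Hclosed : op_closed D A) (Hreal : op_real D A)
  (u : ER) (Hu : le 0 u)
  (phi : ER -> R) (Hphi : rdual phi) (Hphi_pos : dle le (fun _ => 0) phi)
  (Hphi_strict : forall f, le 0 f -> f <> 0 -> 0 < phi f)
  (m1 m2 : nat)
  (Hdom1 : forall x, dom_pow (op_graph D A) setT m1 x -> ideal_E le u x)
  (Hdom2 : forall x', dom_pow (adjoint_graph D A) is_dual m2 x' ->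
                      ideal_Ed le phi x')
  (lambda0 : R) (v : ER) (Hv0 : v <> 0)
  (Hker : forall x, (D x /\ A x = lambda0 *: x) <->
                    exists c : (R * R)%type, x = cxscale c (cx_real v))
  (Hvu : exists c : R, 0 < c /\ le (c *: u) v)
  (psi : ER -> R) (Hpsi0 : psi <> (fun _ => 0))
  (Hpsi : adjoint_graph D A (dual_real psi) (dual_scale lambda0 (dual_real psi)))
  (Hpsiphi : exists c : R, 0 < c /\ dle le (fun x => c * phi x) psi)
  (mu0 : R) (Rmu : @cplx R ER -> @cplx R ER)
  (HR : is_resolvent D A mu0 Rmu) :
  (op_ge le Rmu (fun f => - cx_tensor u (dual_real phi) f) ->
     forall n : nat, (0 < n)%N ->
       op_ge le (iter n Rmu) (fun f => - cx_tensor u (dual_real phi) f)) /\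
  (op_ge le (cx_tensor u (dual_real phi)) Rmu ->
     forall n : nat, (0 < n)%N ->
       op_ge le (cx_tensor u (dual_real phi))
                (fun f => (-1) ^+ n.-1 *: iter n Rmu f)).
Proof.
have [D0 [DD [DZc Alin]]] := Hlin.
have cx10 : forall x : @cplx R ER, cxscale (1, 0) x = x.
  by case=> a b; rewrite /cxscale /= !scale1r !scale0r subr0 addr0.
have cxs0 : forall (s : R) (x : @cplx R ER), cxscale (s, 0) x = s *: x.
  by move=> s [a b]; rewrite /cxscale /= !scale0r subr0 addr0.
have DZ : forall (s : R) x, D x -> D (s *: x) by move=> s x Dx; rewrite -cxs0; exact: DZc.
have A0 : A 0 = 0.
  have := Alin (1, 0) 0 0 D0 D0; rewrite !cx10 addr0 => h.
  by apply/eqP; rewrite -[X in X == _](addrK (A 0)) -h subrr.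
have AZ : forall (s : R) x, D x -> A (s *: x) = s *: A x.
  move=> s x Dx; have := Alin (s, 0) x 0 Dx D0; by rewrite addr0 A0 addr0 !cxs0.
have AD : forall x y, D x -> D y -> A (x + y) = A x + A y.
  by move=> x y Dx Dy; have := Alin (1, 0) x y Dx Dy; rewrite !cx10.
have [HR1 [HR2 _]] := HR.
have RZ : forall (s : R) y, Rmu (s *: y) = s *: Rmu y.
  move=> s y; have [Dx Ex] := HR1 y.
  rewrite -{1}Ex -(HR2 _ (DZ s _ Dx)); congr Rmu.
  by rewrite AZ // scalerBr !scalerA mulrC.
have RD : forall y z, Rmu (y + z) = Rmu y + Rmu z.
  move=> y z; have [Dx Ex] := HR1 y; have [Dx' Ex'] := HR1 z.
  rewrite -{1}Ex -{1}Ex' -(HR2 _ (DD _ _ Dx Dx')); congr Rmu.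
  rewrite AD // scalerDr opprD !addrA; congr (_ + _).
  by rewrite -!addrA [X in _ + X]addrC.
set V : @cplx R ER := cx_real v.
have [DV AV] : D V /\ A V = lambda0 *: V.
  by apply/Hker; exists (1, 0); rewrite cx10.
have Hml : mu0 - lambda0 != 0.
  apply/eqP => h; apply: Hv0.
  have := HR2 V DV; rewrite AV -scalerBl h scale0r.
  have -> : (0 : @cplx R ER) = 0 *: 0 by rewrite scale0r.
  rewrite RZ scale0r => /(congr1 fst) /= <-. by [].
set r := (mu0 - lambda0)^-1.
have RV : Rmu V = r *: V.
  have := HR2 V DV; rewrite AV -scalerBl RZ => h.
  by rewrite -{2}h scalerA mulVf // scale1r.
have [[[psilin psicont] _] [_ Hpair]] := Hpsi.
have {}psilin : forall a x y, psi (a *: x + y) = a * psi x + psi y := psilin.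
have psiD : forall x y, psi (x + y) = psi x + psi y.
  by move=> x y; rewrite -[x]scale1r psilin mul1r scale1r.
have psi0 : psi 0 = 0.
  have := psilin 1 0 0; rewrite scale1r addr0 mul1r => h.
  by apply/eqP; rewrite -[X in X == _](addrK (psi 0)) -h subrr.
have psiZ : forall a x, psi (a *: x) = a * psi x.
  by move=> a x; have := psilin a x 0; rewrite addr0 psi0 addr0.
have psiN : forall x, psi (- x) = - psi x.
  by move=> x; rewrite -scaleN1r psiZ mulN1r.
have psiA : forall x, D x -> psi (A x).1 = lambda0 * psi x.1 /\ psi (A x).2 = lambda0 * psi x.2.
  move=> x Dx; have := Hpair x Dx; rewrite /cx_pairing /= !mulr0 !subr0 !addr0.
  by case.
have psiR : forall y, psi (Rmu y).1 = r * psi y.1.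
  move=> y; have [Dx Ex] := HR1 y.
  move: (Rmu y) Dx Ex => x Dx Ex.
  have [h1 _] := psiA _ Dx.
  have EA : A x = mu0 *: x - y by rewrite -Ex opprB addrC subrK.
  rewrite EA /= psiD psiN psiZ in h1.
  have -> : psi y.1 = (mu0 - lambda0) * psi x.1.
    by rewrite mulrBl -h1; ring.
  by rewrite mulrA mulVf // mul1r.
have Vdom : forall m (s : R), dom_pow (op_graph D A) setT m (s *: V).
  elim=> [|m IH] s //=.
  exists ((s * lambda0) *: V); split; last exact: IH.
  by split; [exact: DZ | rewrite AZ // AV scalerA].
have [k1 [k1ge0 Hk1]] := Hdom1 _ (Vdom m1 1).
have vk1 : le v (k1 *: u).
  have [h _] := Hk1 0; move: h; by rewrite cos0 sin0 /= scale0r addr0 !scale1r.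
have rdual_s : forall s : R, is_dual (dual_scale s (dual_real psi)).
  move=> s; split; split => /=.
  - by move=> a x y; rewrite psilin; ring.
  - by move=> x; apply: continuousM; [exact: cst_continuous | exact: psicont].
  - by move=> a x y; rewrite !mulr0 addr0.
  - by move=> x; exact: cst_continuous.
have psidom : forall m (s : R), dom_pow (adjoint_graph D A) is_dual m (dual_scale s (dual_real psi)).
  elim=> [|m IH] s /=; first exact: rdual_s.
  exists (dual_scale (s * lambda0) (dual_real psi)); split; last exact: IH.
  split; first exact: rdual_s. split; first exact: rdual_s.
  move=> x Dx; have [h1 h2] := psiA _ Dx.
  by rewrite /cx_pairing /= h1 h2 !mulr0 !subr0 !addr0 !mulrA.
have [k2 [k2ge0 Hk2]] := Hdom2 _ (psidom m2 1).
have psik2 : forall x, le 0 x -> psi x <= k2 * phi x.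
  move=> x hx; have [h _] := Hk2 0; move: (h x hx) => /=.
  by rewrite cos0 sin0 !mul1r mul0r addr0.
have [a [agt0 Ha]] := Hvu.
have [b [bgt0 Hb]] := Hpsiphi.
have psib : forall x, le 0 x -> b * phi x <= psi x := Hb.
have phi_ge0 : forall x, le 0 x -> 0 <= phi x := Hphi_pos.
have v_ge0 : le 0 v.
  apply: (bl_trans HBL _ Ha). exact: (bl_scale HBL (ltW agt0) Hu).
have psi_ge0 : forall x, le 0 x -> 0 <= psi x.
  move=> x hx; apply: le_trans (psib x hx). apply: mulr_ge0; [exact: ltW | exact: phi_ge0].
have phi0 : phi 0 = 0.
  have [philin _] := Hphi; have := philin 1 0 0; rewrite scale1r addr0 mul1r => h.
  by apply/eqP; rewrite -[X in X == _](addrK (phi 0)) -h subrr.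
have tens : forall x, cpos le x -> cx_tensor u (dual_real phi) x = cx_real (phi x.1 *: u).
  case=> x1 x2 [/= -> _]; rewrite /cx_tensor /cx_pairing /cxscale /cx_real /= phi0.
  by rewrite !subr0 !addr0 !scaler0 scale0r subr0 addr0.
have addl : forall p X Y, le X Y -> le (p + X) (p + Y).
  by move=> p X Y h; rewrite ![p + _]addrC; exact: (bl_add HBL).
have I1 : forall x1, le 0 x1 -> le (phi x1 *: u) (((a * b)^-1 * psi x1) *: v).
  move=> x1 hx1.
  have ha0 : a != 0 by rewrite gt_eqF.
  have -> : phi x1 *: u = (phi x1 / a) *: (a *: u) by rewrite scalerA mulrVK ?unitfE.
  apply: (bl_trans HBL (le_scale HBL _ _ _ _ Ha)).
    by apply: divr_ge0; [exact: phi_ge0 | exact: ltW].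
  apply: (le_scale_vec HBL) => //.
  have h1 : phi x1 <= psi x1 / b by rewrite ler_pdivlMr // mulrC; exact: psib.
  have -> : (a * b)^-1 * psi x1 = (psi x1 / b) / a by rewrite invfM; ring.
  by apply: ler_wpM2r => //; rewrite invr_ge0 ltW.
have L : forall s x1, 0 <= s -> le 0 x1 ->
    le ((s * psi x1) *: v) ((s * k1 * k2 * phi x1) *: u).
  move=> s x1 hs hx1.
  have hsp : 0 <= s * psi x1 by rewrite mulr_ge0 // psi_ge0.
  apply: (bl_trans HBL (le_scale HBL _ _ _ hsp vk1)); rewrite scalerA.
  apply: (le_scale_vec HBL) => //.
  have -> : s * psi x1 * k1 = (s * k1) * psi x1 by ring.
  have -> : s * k1 * k2 * phi x1 = (s * k1) * (k2 * phi x1) by ring.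
  by apply: ler_wpM2l; [rewrite mulr_ge0 | exact: psik2].
have psiV : psi V.1 = psi v by [].
split.
- move=> [c0 [c0gt0 Hc0]] n n0.
  set K := c0 * (a * b)^-1.
  have HK : forall y, cpos le y -> cpos le (Rmu y + (K * psi y.1) *: V).
    move=> y hy; have := Hc0 y hy; rewrite tens // => -[h2 h1].
    split.
      move: h2 => /=; rewrite !(oppr0, scaler0, subr0, addr0) => ->; by rewrite ?scaler0 ?addr0.
    move: h1 => /=; rewrite scalerN opprK => h1.
    apply: (bl_trans HBL h1); apply: addl.
    rewrite /K -mulrA -scalerA; apply: (le_scale HBL); first exact: ltW.
    exact: I1 hy.2.
  have HTadd : forall y s, Rmu (y + s *: V) = Rmu y + (s * r) *: V.
    by move=> y s'; rewrite RD RZ RV scalerA.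
  have [C HC] := iter_bound HBL _ _ _ _ _ _ psilin HTadd psiR psiV HK n.
  set Cp := Num.max C 0.
  have Cp0 : 0 <= Cp by rewrite le_max lexx orbT.
  have CCp : C <= Cp by rewrite le_max lexx.
  exists (Cp * k1 * k2 + 1); split.
    by apply: ltr_pwDr => //; rewrite !mulr_ge0.
  move=> x hx; rewrite tens //.
  have [h2 h1] := HC x hx.
  split.
    move: h2 => /=; rewrite !(oppr0, scaler0, subr0, addr0) => ->; by rewrite ?scaler0 ?addr0 ?subr0.
  move: h1 => /=; rewrite scalerN opprK => h1.
  apply: (bl_trans HBL h1); apply: addl.
  apply: (bl_trans HBL (y := (Cp * psi x.1) *: v)).
    apply: (le_scale_vec HBL) => //; apply: ler_wpM2r => //; exact: psi_ge0 hx.2.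
  apply: (bl_trans HBL (L _ _ Cp0 hx.2)); rewrite scalerA.
  apply: (le_scale_vec HBL) => //.
  apply: ler_wpM2r; first exact: phi_ge0 hx.2.
  by rewrite lerDl.
- move=> [c0 [c0gt0 Hc0]] n n0.
  have c0n : c0 != 0 by rewrite gt_eqF.
  set K := c0^-1 * (a * b)^-1.
  set T := fun y => - Rmu y.
  have HK : forall y, cpos le y -> cpos le (T y + (K * psi y.1) *: V).
    move=> y hy; have := Hc0 y hy; rewrite tens // => -[h2 h1].
    split.
      move: h2 => /=; rewrite scaler0 add0r => /eqP; rewrite oppr_eq0 scaler_eq0 (negbTE c0n) /= => /eqP ->.
      by rewrite ?oppr0 ?scaler0 ?addr0.
    have c0i : 0 <= c0^-1 by rewrite invr_ge0 ltW.
    have {}h1 := bl_scale HBL c0i h1.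
    move: h1 => /=; rewrite scalerBr !scalerA mulVf // scale1r => h1.
    apply: (bl_trans HBL h1); rewrite addrC; apply: addl.
    rewrite /K -mulrA -[(c0^-1 * phi y.1) *: u]scalerA -[(c0^-1 * _) *: v]scalerA; apply: (le_scale HBL); first by rewrite invr_ge0 ltW.
    exact: I1 hy.2.
  have HTadd : forall y s, T (y + s *: V) = T y + (s * - r) *: V.
    by move=> y s'; rewrite /T RD RZ RV scalerA opprD mulrN scaleNr.
  have HpsiT : forall y, psi (T y).1 = - r * psi y.1.
    by move=> y; rewrite /T /= psiN psiR mulNr.
  have [C HC] := iter_bound HBL _ _ _ _ _ _ psilin HTadd HpsiT psiV HK n.
  have iterT : forall m x, iter m T x = (-1) ^+ m *: iter m Rmu x.
    elim=> [|m IH] x /=; first by rewrite scale1r.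
    by rewrite IH /T RZ exprS -scalerA scaleN1r.
  set Cp := Num.max C 0.
  have Cp0 : 0 <= Cp by rewrite le_max lexx orbT.
  have CCp : C <= Cp by rewrite le_max lexx.
  set c := (Cp * k1 * k2 + 1)^-1.
  have cgt0 : 0 < c by rewrite invr_gt0 ltr_pwDr // !mulr_ge0.
  exists c; split => // x hx; rewrite tens //.
  have -> : (-1) ^+ n.-1 *: iter n Rmu x = - iter n T x.
    have E1 : (-1) ^+ n = - (-1) ^+ n.-1 :> R by rewrite -{1}(prednK n0) exprS mulN1r.
    by rewrite iterT E1 scaleNr opprK.
  rewrite scalerN opprK.
  have [h2 h1] := HC x hx.
  split.
    move: h2 => /=; rewrite scaler0 addr0 => ->; by rewrite scaler0 addr0.
  have {}h1 := bl_scale HBL (ltW cgt0) h1.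
  move: h1 => /=; rewrite scalerDr scalerA => h1.
  apply: (bl_trans HBL h1); rewrite [X in le _ X]addrC mulrA; apply: addl.
  apply: (bl_trans HBL (y := ((c * Cp) * psi x.1) *: v)).
    apply: (le_scale_vec HBL) => //; apply: ler_wpM2r; first exact: psi_ge0 hx.2.
    by apply: ler_wpM2l => //; exact: ltW.
  have cCp0 : 0 <= c * Cp by rewrite mulr_ge0 // ltW.
  apply: (bl_trans HBL (L _ _ cCp0 hx.2)).
  rewrite -[X in le _ X]scale1r scalerA.
  apply: (le_scale_vec HBL) => //.
  apply: ler_wpM2r; first exact: phi_ge0 hx.2.
  rewrite -!mulrA /c mulrC ler_pdivrMr ?ltr_pwDr ?mulr_ge0 //.
  by rewrite mul1r mulrA lerDl.
Qed.
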